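(* Let $q$ be a power of a prime $p$, let $c \in \mathbb{F}_q$, let $n \geq 2$ and let $W \subseteq \{0,1,\ldots,n\}$. If $q = 2$, further assume that $n \notin W$. Then: (i) If the least period of the function $\gamma_{W,c} : \mathbb{Z}_{q^n-1} \to \mathbb{F}_q$ given by $\gamma_{W,c} = \sum_{w \in W} (-1)^w \delta_w - c\,\delta_0$ is not a divisor of $(q^n-1)/\Phi_n(q)$, then there exists an irreducible polynomial $P(x)$ of degree $n$ over $\mathbb{F}_q$ such that $S_{n-W}(P) \neq c$. (ii) If the least period of the function $\Delta_{W,c} : \mathbb{Z}_{q^n-1} \to \mathbb{F}_q$ given by $\Delta_{W,c} = \delta_0 - \left( \sum_{w \in W}(-1)^w \delta_w - c\,\delta_0 \right)^{\otimes (q-1)}$ is not a divisor of $(q^n-1)/\Phi_n(q)$, then there exists an irreducible polynomial $P(x)$ of degree $n$ over $\mathbb{F}_q$ such that $S_{n-W}(P) = c$.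
   Context: $\Phi_n(x) \in \mathbb{Z}[x]$ is the $n$-th cyclotomic polynomial. For $h(x)\in\mathbb{F}_q[x]$ of degree $n$ and $V \subseteq \{0,\ldots,n\}$, $S_V(h) := \sum_{v \in V}[x^v]h(x)$ (sum of the coefficients of $x^v$, $v \in V$), and $n - W := \{n - w : w \in W\}$. Define $\Omega(0) = \{0\} \subseteq \mathbb{Z}_{q^n-1}$ and, for $1 \le w \le n$, $\Omega(w)$ is the set of $k \in \mathbb{Z}_{q^n-1}$ whose canonical representative in $\{0,1,\ldots,q^n-2\}$ equals $q^{i_1} + \cdots + q^{i_w}$ for some integers $0 \le i_1 < \cdots < i_w \le n-1$; $\delta_w : \mathbb{Z}_{q^n-1} \to \{0,1\} \subseteq \mathbb{F}_p \subseteq \mathbb{F}_q$ is the indicator function of $\Omega(w)$ (so $\delta_0$ is the Kronecker delta at $0$). For $f,g : \mathbb{Z}_N \to \mathbb{F}_q$ the convolution is $(f \otimes g)(i) = \sum_{j+k=i,\ j,k \in \mathbb{Z}_N} f(j)g(k)$, and $f^{\otimes m}$ is the $m$-fold convolution of $f$ with itself. A function $f : \mathbb{Z}_N \to \mathbb{F}_q$ is $r$-periodic ($r \in \mathbb{N}$) if $f(i) = f(i + r)$ for all $i \in \mathbb{Z}_N$; its least period is the smallest such positive integer $r$. *)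

(* Defs.v *)
From HB Require Import structures.
From mathcomp Require Import all_boot all_order all_algebra all_field.
Set Implicit Arguments. Unset Strict Implicit. Unset Printing Implicit Defensive.
Import Order.TTheory GRing.Theory Num.Theory.
Local Open Scope ring_scope.

(* k \in Omega(w) (k given by its canonical representative in {0,..,q^n-2}):
   k = q^{i_1} + ... + q^{i_w} for some 0 <= i_1 < ... < i_w <= n-1,
   i.e. k is the sum of q^i over a w-element subset of {0,..,n-1}. *)
Definition inOmega (q n w k : nat) : bool :=
  [exists I : {set 'I_n}, (#|I| == w) && (k == \sum_(i in I) q ^ i)%N].

Definition delta (F : nzRingType) (q n N w : nat) (k : 'I_N) : F :=
  (inOmega q n w k)%:R.

Definition conv (F : nzRingType) (N : nat) (f g : 'I_N -> F) (i : 'I_N) : F :=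
  \sum_(j : 'I_N) \sum_(k : 'I_N | ((j + k) %% N)%N == i) f j * g k.

Definition convpow (F : nzRingType) (N m : nat) (f : 'I_N -> F) : 'I_N -> F :=
  iter m.-1 (conv f) f.

Definition periodic (F : Type) (N : nat) (f : 'I_N -> F) (r : nat) : Prop :=
  forall i j : 'I_N, nat_of_ord j = ((i + r) %% N)%N -> f i = f j.

Definition is_least_period (F : Type) (N : nat) (f : 'I_N -> F) (r : nat) : Prop :=
  (0 < r)%N /\ periodic f r /\ forall r', (0 < r')%N -> (r' < r)%N -> ~ periodic f r'.

Definition cycquot (q n : nat) : int :=
  (((q ^ n - 1)%N)%:Z %/ ('Phi_n).[q%:Z])%Z.

Definition Ssum (F : nzRingType) (n : nat) (V : {set 'I_n.+1}) (h : {poly F}) : F :=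
  \sum_(v in V) h`_v.

Definition negset (n : nat) (W : {set 'I_n.+1}) : {set 'I_n.+1} :=
  [set rev_ord w | w in W].

Definition gammaWc (F : finFieldType) (n : nat) (W : {set 'I_n.+1}) (c : F)
  (k : 'I_(#|F| ^ n - 1)) : F :=
  \sum_(w in W) (-1) ^+ w * delta F #|F| n w k
  - c * delta F #|F| n 0 k.

Definition DeltaWc (F : finFieldType) (n : nat) (W : {set 'I_n.+1}) (c : F)
  (k : 'I_(#|F| ^ n - 1)) : F :=
  delta F #|F| n 0 k - convpow (#|F|.-1) (gammaWc W c) k.

(* Main.v *)
Require Import Defs.
From HB Require Import structures.
From mathcomp Require Import all_boot all_order all_algebra all_field.
From mathcomp Require Import zify ring.
From Stdlib Require Import Classical.
Import GRing.Theory.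
Local Open Scope ring_scope.

Section Periods.
Variables (T : eqType) (N : nat) (f : 'I_N -> T).
Hypothesis N_gt0 : (0 < N)%N.
Local Open Scope nat_scope.

Definition periodicb r := [forall i : 'I_N, forall j : 'I_N,
  (nat_of_ord j == (i + r) %% N)%N ==> (f i == f j)].

Lemma periodicP r : reflect (periodic f r) (periodicb r).
Proof.
apply: (iffP forallP) => [H i j Hj | H i].
  by have /forallP/(_ j)/implyP := H i; rewrite Hj eqxx => /(_ isT)/eqP.
by apply/forallP => j; apply/implyP => /eqP Hj; apply/eqP/H.
Qed.

Lemma periodic_N : periodic f N.
Proof. by move=> i j; rewrite modnDr modn_small // => /val_inj ->. Qed.

Lemma periodic0 : periodic f 0.
Proof. by move=> i j; rewrite addn0 modn_small // => /val_inj ->. Qed.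

Lemma periodicD a b : periodic f a -> periodic f b -> periodic f (a + b).
Proof.
move=> Ha Hb i j Hj; pose k := Ordinal (ltn_pmod (i + a) N_gt0).
rewrite (Ha i k) //; apply: Hb; by rewrite /= modnDml Hj addnA.
Qed.

Lemma periodicM a t : periodic f a -> periodic f (a * t).
Proof.
move=> Ha; elim: t => [|t IH]; first by rewrite muln0; exact: periodic0.
by rewrite mulnS; apply: periodicD.
Qed.

Lemma periodicB a b : periodic f a -> periodic f (a + b) -> periodic f b.
Proof.
move=> Ha Hab i j Hj.
pose k := Ordinal (ltn_pmod (j + a) N_gt0).
rewrite (Hab i k); last by rewrite /= Hj modnDml -addnA (addnC b) addnA.
by symmetry; apply: Ha.
Qed.

Lemma least_period_dvd r M : is_least_period f r -> periodic f M -> (r %| M)%N.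
Proof.
move=> [r_gt0 [Pr Hmin]] PM.
case: (posnP (M %% r)) => [H|Hs]; first by apply/eqP.
exfalso.
apply: (Hmin (M %% r)) => //; first by rewrite ltn_pmod.
apply: (@periodicB (r * (M %/ r))%N); first exact: periodicM.
by rewrite mulnC -divn_eq.
Qed.

Lemma least_period_exists : exists r, is_least_period f r.
Proof.
have ex : exists r, (0 < r)%N && periodicb r.
  by exists N; rewrite N_gt0; apply/periodicP/periodic_N.
case: (ex_minnP ex) => r /andP[r_gt0 /periodicP Pr] Hmin.
exists r; split=> //; split=> // r' r'_gt0 lt_r' Pr'.
have := Hmin r'; rewrite r'_gt0 => /(_ (introT (periodicP r') Pr')).
by rewrite leqNgt lt_r'.
Qed.

End Periods.

Section Digits.
Local Open Scope nat_scope.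
Variables (q : nat).
Hypothesis q_gt1 : 1 < q.

Lemma geom m : (q - 1) * (\sum_(i < m) q ^ i) = q ^ m - 1.
Proof.
elim: m => [|m IH]; first by rewrite big_ord0 muln0 expn0.
rewrite big_ord_recr /= mulnDr IH expnS.
have h1 : 0 < q ^ m by rewrite expn_gt0 ltnW.
have h2 : q ^ m <= q * q ^ m by rewrite leq_pmull // ltnW.
rewrite mulnBl mul1n mulnC; lia.
Qed.

Lemma geom_lt m : \sum_(i < m) q ^ i < q ^ m.
Proof.
have := geom m; have h : 0 < q ^ m by rewrite expn_gt0 ltnW.
have : \sum_(i < m) q ^ i <= (q - 1) * (\sum_(i < m) q ^ i).
  by rewrite leq_pmull // subn_gt0.
lia.
Qed.

Lemma leq_sum_cond (I : finType) (P : pred I) (g : I -> nat) :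
  \sum_(i | P i) g i <= \sum_i g i.
Proof.
rewrite big_mkcond /=; apply: leq_sum => i _; by case: (P i).
Qed.

Variable n : nat.
Definition spow (I : {set 'I_n}) := \sum_(i in I) q ^ i.

Lemma spow_split (I : {set 'I_n}) (j : 'I_n) :
  spow I = \sum_(i in I | i < j) q ^ i + (j \in I) * q ^ j
           + q ^ j.+1 * \sum_(i in I | j < i) q ^ (i - j.+1).
Proof.
rewrite /spow (bigID (fun i : 'I_n => i < j)) /= -addnA; congr (_ + _).
rewrite (bigID (fun i : 'I_n => i == j)) /=; congr (_ + _).
  case: (boolP (j \in I)) => jI.
    rewrite (big_pred1 j) ?mul1n // => i /=.
    by case: eqP => [->|]; rewrite ?jI ?ltnn ?andbF ?andbT.
  rewrite mul0n big_pred0 // => i /=.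
  by case: eqP => [->|]; rewrite ?(negbTE jI) ?andbF.
rewrite big_distrr /=; apply: eq_big => i /=.
  rewrite -andbA; congr (_ && _).
  by rewrite -leqNgt ltn_neqAle eq_sym; case: (i == j); rewrite ?andbF ?andbT // andbC.
move=> /andP[/andP[_ hi1] hi2].
rewrite -expnD subnKC //.
by rewrite ltn_neqAle eq_sym hi2 leqNgt hi1.
Qed.

Lemma spow_digit (I : {set 'I_n}) (j : 'I_n) :
  (spow I %/ q ^ j) %% q = (j \in I).
Proof.
have qj : 0 < q ^ j by rewrite expn_gt0 ltnW.
have lo : \sum_(i in I | i < j) q ^ i < q ^ j.
  apply: leq_ltn_trans (geom_lt j).
  rewrite (big_ord_widen_cond n (fun i => true) (fun i => q ^ i)); last exact: ltnW.
  rewrite big_mkcond [X in _ <= X]big_mkcond /=; apply: leq_sum => i _.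
  by case: (i \in I); case: (i < j).
rewrite (spow_split I j); set lw := \sum_(i in I | i < j) _ in lo *; set X := \sum_(i in I | j < i) _.
have -> : lw + (j \in I) * q ^ j + q ^ j.+1 * X = ((j \in I) + q * X) * q ^ j + lw.
  by rewrite expnS; ring.
rewrite divnMDl // divn_small // addn0.
rewrite addnC mulnC modnMDl modn_small //; case: (j \in I) => //=; exact: ltnW.
Qed.

Lemma spow_inj : injective spow.
Proof.
move=> I J h; apply/setP => j.
have := spow_digit I j; rewrite h spow_digit.
by case: (j \in I); case: (j \in J).
Qed.

Lemma spow_le (I : {set 'I_n}) : spow I <= \sum_(i < n) q ^ i.
Proof. exact: leq_sum_cond. Qed.

Lemma spow_lt (I : {set 'I_n}) : 0 < n -> (2 < q) || (I != setT) ->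
  spow I < q ^ n - 1.
Proof.
move=> n_gt0 /orP[q_gt2 | /eqP neqT].
  have g := geom n; have := spow_le I.
  have : 1 <= \sum_(i < n) q ^ i.
    by rewrite (bigD1 (Ordinal n_gt0)) //= expn0 leq_addr.
  have : 2 * \sum_(i < n) q ^ i <= (q - 1) * \sum_(i < n) q ^ i.
    by rewrite leq_mul2r; apply/orP; right; rewrite ltn_subRL addn1.
  lia.
have [j jI] : exists j, j \notin I.
  case: (pickP (fun j => j \notin I)) => [j jI|H]; first by exists j.
  by exfalso; apply: neqT; apply/setP => i; rewrite inE; have := H i => /= /negbFE.
have g := geom n.
have hq : \sum_(i < n) q ^ i <= (q - 1) * \sum_(i < n) q ^ i.
  by rewrite leq_pmull // subn_gt0.
have : spow I + q ^ j <= \sum_(i < n) q ^ i.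
  rewrite [X in _ <= X](bigID (fun i => i \in I)) /= leq_add2l.
  by rewrite (bigD1 j) //= leq_addr.
have : 0 < q ^ j by rewrite expn_gt0 ltnW.
lia.
Qed.

End Digits.

Lemma PoszXn (q n : nat) : ((q ^ n)%N)%:Z = (q%:Z)^+n.
Proof. by rewrite -!natz natrX. Qed.

Section Cyc.
Variables (q n : nat).
Hypothesis q_gt1 : (1 < q)%N.
Hypothesis n_gt0 : (0 < n)%N.

Let Q : {poly int} := \prod_(e <- divisors n | e != n) 'Phi_e.

Lemma XnQ : 'X^n - 1 = 'Phi_n * Q.
Proof.
rewrite -prod_Cyclotomic // (bigD1_seq n) //= ?divisors_uniq //.
by rewrite -dvdn_divisors.
Qed.

Lemma Qdvd d : (0 < d)%N -> (d %| n)%N -> (d < n)%N ->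
  exists R : {poly int}, Q = ('X^d - 1) * R.
Proof.
move=> d_gt0 dn dltn.
exists (\prod_(e <- divisors n | (e != n) && ~~ (e %| d)%N) 'Phi_e).
rewrite /Q (bigID (fun e => (e %| d)%N)) /=; congr (_ * _).
rewrite -prod_Cyclotomic // -big_filter; apply: perm_big.
apply: uniq_perm; first by rewrite filter_uniq // divisors_uniq.
  exact: divisors_uniq.
move=> e; rewrite mem_filter -!dvdn_divisors //.
apply/idP/idP => [/andP[/andP[_ ->]]//|ed].
rewrite ed andbT; have ed' := dvdn_leq d_gt0 ed.
rewrite (dvdn_trans ed dn) andbT; apply/eqP => en; lia.
Qed.

Lemma cycquotE : cycquot q n = Q.[q%:Z].
Proof.
have e1 : ((q ^ n - 1)%N)%:Z = (q%:Z) ^+ n - 1.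
  by rewrite -subzn ?expn_gt0 ?(ltnW q_gt1) // PoszXn.
have e2 : (q%:Z) ^+ n - 1 = ('Phi_n).[q%:Z] * Q.[q%:Z].
  by rewrite -hornerM -XnQ !hornerE.
rewrite /cycquot e1 e2 mulKz //.
apply/eqP => h; move: e2; rewrite h mul0r => /eqP; rewrite subr_eq0 => /eqP.
move/(congr1 (fun z : int => `|z|%N)); rewrite abszX /= => h1.
have : (q ^ n > 1)%N by rewrite -(expn0 q) ltn_exp2l.
by rewrite h1.
Qed.

Lemma cycquot_dvd d : (0 < d)%N -> (d %| n)%N -> (d < n)%N ->
  ((q ^ d - 1) %| `|cycquot q n|)%N.
Proof.
move=> d_gt0 dn dltn; rewrite cycquotE; have [R ->] := @Qdvd d d_gt0 dn dltn.
rewrite hornerM abszM; apply: dvdn_mulr.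
have -> : ('X^d - 1 : {poly int}).[q%:Z] = ((q ^ d - 1)%N)%:Z.
  by rewrite !hornerE -subzn ?expn_gt0 ?(ltnW q_gt1) // PoszXn.
by rewrite absz_nat.
Qed.

End Cyc.

Lemma card_natr0 (F : finFieldType) : (#|F|%:R : F) = 0.
Proof.
have [p pr pcharF] := finPcharP F.
apply/eqP; rewrite -(dvdn_pcharf pcharF) (card_pprimeChar pcharF).
case: (posnP (logn p #|F|)) => [h|h]; last by rewrite dvdn_exp.
by have := finNzRing_gt1 F; rewrite (card_pprimeChar pcharF) h.
Qed.

Lemma ext_exists (F : finFieldType) n : (0 < n)%N ->
  {L : splittingFieldType F | \dim {:L} = n}.
Proof.
move=> n_gt0; pose m := (#|F| ^ n)%N.
have F_gt1 : (1 < #|F|)%N by apply: finNzRing_gt1.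
have m_gt1 : (1 < m)%N by rewrite -(expn0 #|F|) ltn_exp2l.
have m_gt0 := ltnW m_gt1; have m1_gt0: (m.-1 > 0)%N by rewrite -ltnS prednK.
pose q (R : nzRingType) : {poly R} := 'X^m - 'X.
have Dq (R : nzRingType) : q R = ('X^(m.-1) - 1) * ('X - 0).
  by rewrite subr0 mulrBl mul1r -exprSr prednK.
have /FinSplittingFieldFor[/= L splitLq]: q F != 0.
  by rewrite Dq monic_neq0 ?rpredM ?monicXsubC ?monicXnsubC.
rewrite [map_poly _ _]rmorphB rmorphXn /= map_polyX -/(q L) in splitLq.
have mL0 : (m%:R : L) = 0.
  by rewrite -(rmorph_nat (in_alg L)) /m natrX card_natr0 expr0n gtn_eqF // rmorph0.
pose Fm := FinFieldExtType L.
exists L.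
have /finField_galois_generator[/= a _ Da]: (1 <= {:L})%VS by apply: sub1v.
pose Em := fixedSpace (a ^+ n)%g; rewrite dimv1 expn1 in Da.
have{splitLq} [zs DqL defL] := splitLq.
have Uzs: uniq zs.
  rewrite -separable_prod_XsubC -(eqp_separable DqL) Dq separable_root andbC.
  rewrite /root !hornerE subr_eq0 eq_sym expr0n gtn_eqF ?oner_eq0 //=.
  rewrite cyclotomic.separable_Xn_sub_1 // -subn1 natrB // subr_eq0.
  by rewrite mL0 eq_sym oner_eq0.
have cardFm : #|Fm| = m.
  suffices /eq_card->: Fm =i zs.
    apply: succn_inj; rewrite (card_uniqP _) //= -(size_prod_XsubC _ id).
    by rewrite -(eqp_size DqL) size_polyDl size_polyXn // size_polyN size_polyX.
  have in_zs: zs =i Em.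
    move=> z; rewrite -root_prod_XsubC -(eqp_root DqL) (sameP fixedSpaceP eqP).
    rewrite /root !hornerE subr_eq0 /= /m; congr (_ == z).
    elim: (n) => [|i IHi]; first by rewrite gal_id.
    by rewrite expgSr expnSr exprM IHi galM ?Da ?memvf.
  suffices defEm: Em = {:L}%VS by move=> z; rewrite in_zs defEm memvf.
  apply/eqP; rewrite eqEsubv subvf -defL -[Em]subfield_closed agenvS //.
  by rewrite subv_add sub1v; apply/span_subvP=> z; rewrite in_zs.
have := card_vspace (fullv : {vspace finvect_type L}).
rewrite card_vspacef.
have -> : #|finvect_type L| = #|Fm| by [].
by rewrite cardFm => /eqP; rewrite eqn_exp2l // => /eqP.
Qed.

Section Ext.
Variables (F : finFieldType) (L : fieldExtType F) (n : nat).
Hypothesis n_gt0 : (0 < n)%N.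
Hypothesis dimL : \dim {:L} = n.
Local Notation q := #|F|.
Local Notation N := (q ^ n - 1)%N.

Lemma q_gt1 : (1 < q)%N. Proof. exact: finNzRing_gt1. Qed.

Lemma N_gt0 : (0 < N)%N.
Proof. by rewrite subn_gt0 -(expn0 q) ltn_exp2l // q_gt1. Qed.

Lemma frob_fix (x : L) : x ^+ (q ^ n) = x.
Proof.
apply/eqP; have := Fermat's_little_theorem {:L}%AS x.
by rewrite memvf /= dimL => <-.
Qed.

Lemma expN1 (x : L) : x != 0 -> x ^+ N = 1.
Proof.
move=> x0; apply: (mulIf x0); rewrite mul1r -exprSr.
by rewrite subn1 prednK ?frob_fix // expn_gt0 ltnW // q_gt1.
Qed.

Lemma in1E (x : L) : (x \in 1%VS) = (x ^+ q == x).
Proof. by have := Fermat's_little_theorem 1%AS x; rewrite /= dimv1 expn1. Qed.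

Lemma frobD (x y : L) : (x + y) ^+ q = x ^+ q + y ^+ q.
Proof.
have [p _ pcharFp] := finPcharP F; rewrite (card_pprimeChar pcharFp).
elim: (logn _ _) => [|k IHk]; first by rewrite !expr1.
rewrite expnSr !exprM {}IHk.
by rewrite -(pchar_lalg L) in pcharFp; rewrite -!(pFrobenius_autE pcharFp) rmorphD.
Qed.

Lemma card_L : #|finvect_type L| = (q ^ n)%N.
Proof.
have := card_vspace (fullv : {vspace finvect_type L}).
by rewrite card_vspacef => ->; rewrite dimL.
Qed.

Definition ordN (k : nat) : 'I_N := Ordinal (ltn_pmod k N_gt0).

Lemma ordN_val (k : 'I_N) : ordN k = k.
Proof. by apply: val_inj; rewrite /= modn_small. Qed.

Definition Gs (x : L) (h : 'I_N -> F) := \sum_(k : 'I_N) (h k)%:A * x ^+ k.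

Lemma key (M : nat) (g : 'I_N -> F) :
  (forall x : L, x != 0 -> x ^+ M != 1 -> Gs x g = 0) -> periodic g M.
Proof.
move=> HG.
pose t (j : 'I_N) : 'I_N := Ordinal (ltn_pmod (j + M) N_gt0).
have tinj : injective t.
  move=> j j' /(congr1 val) /= /eqP; rewrite eqn_modDr !modn_small //.
  by move/eqP/val_inj.
pose U := \poly_(k < N) ((g (invF tinj (ordN k)))%:A - (g (ordN k))%:A : L).
have HU : forall x : L, x != 0 -> U.[x] = 0.
  move=> x x0; rewrite horner_poly.
  under eq_bigr => k _ do rewrite ordN_val mulrBl.
  rewrite sumrB.
  have -> : \sum_(k < N) (g (invF tinj k))%:A * x ^+ k = x ^+ M * Gs x g.
    rewrite (reindex_inj tinj) /Gs mulr_sumr; apply: eq_bigr => j _.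
    rewrite invF_f /= expr_mod ?expN1 // exprD; ring.
  rewrite -/(Gs x g); case: (eqVneq (x ^+ M) 1) => [->|hM].
    by rewrite mul1r subrr.
  by rewrite HG // mulr0 subrr.
have U0 : U = 0.
  apply/eqP; apply/negPn/negP => Unz.
  pose rs := enum (predC1 0 : pred (finvect_type L)).
  have := max_poly_roots Unz (rs := rs).
  have -> : all (root U) rs.
    apply/allP => x; rewrite /rs.
    move: (@mem_enum (finvect_type L) (predC1 0) x) => /= ->.
    by move=> x0; apply/rootP/HU.
  have hs : (size U <= N)%N by apply: size_poly.
  rewrite /rs enum_uniq -cardE cardC1 card_L => /(_ isT isT).
  move: hs; rewrite -subn1 => h1 h2; have := leq_trans h2 h1; by rewrite ltnn.
move=> i j Hj.
have : U`_j = 0 by rewrite U0 coef0.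
rewrite coef_poly ltn_ord ordN_val => /eqP; rewrite subr_eq0 => /eqP.
have -> : invF tinj j = i.
  have -> : j = t i by apply: val_inj.
  by rewrite invF_f.
by rewrite -!in_algE => /fmorph_inj.
Qed.

End Ext.

Section Conv.
Variables (F : finFieldType) (L : fieldExtType F) (n : nat).
Hypothesis n_gt0 : (0 < n)%N.
Hypothesis dimL : \dim {:L} = n.
Local Notation q := #|F|.
Local Notation N := (q ^ n - 1)%N.
Local Notation Gs := (@Gs F L n).

Lemma Gs_conv (x : L) (h1 h2 : 'I_N -> F) : x != 0 ->
  Gs x (conv h1 h2) = Gs x h1 * Gs x h2.
Proof.
move=> x0; rewrite /Gs /conv mulr_suml.
under eq_bigr => i _ do rewrite -in_algE rmorph_sum /= mulr_suml.
rewrite exchange_big /=; apply: eq_bigr => j _.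
rewrite mulr_sumr.
under eq_bigr => i _ do rewrite -in_algE rmorph_sum /= mulr_suml big_mkcond /=.
rewrite exchange_big /=; apply: eq_bigr => k _.
rewrite -big_mkcond /=.
rewrite (big_pred1 (@ordN F n n_gt0 (j + k))); last first.
  move=> i /=; apply/eqP/eqP => h; last by rewrite h.
  by apply: val_inj; rewrite /= h.
rewrite /ordN /= (expr_mod _ (@expN1 F L n dimL x x0)) exprD -!in_algE rmorphM /=; ring.
Qed.

Lemma Gs_convpow (x : L) m (h : 'I_N -> F) : x != 0 -> (0 < m)%N ->
  Gs x (convpow m h) = Gs x h ^+ m.
Proof.
move=> x0; case: m => // m _; rewrite /convpow /=.
elim: m => [|m IH]; first by rewrite expr1.
by rewrite iterS (Gs_conv x h (iter m (conv h) h) x0) IH !exprS.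
Qed.

End Conv.

Section Bridge.
Variables (F : finFieldType) (L : fieldExtType F) (n : nat).
Hypothesis n_gt0 : (0 < n)%N.
Hypothesis dimL : \dim {:L} = n.
Local Notation q := #|F|.
Local Notation N := (q ^ n - 1)%N.
Local Notation M := (`|cycquot q n|%N).

Lemma alpha_deg (a : L) : a != 0 -> a ^+ M != 1 -> \dim <<1; a>>%VS = n.
Proof.
move=> a0 aM; set E := <<1; a>>%AS.
have dE : (\dim E %| n)%N by rewrite -dimL; apply: field_dimS; apply: subvf.
have dE0 : (0 < \dim E)%N := adim_gt0 E.
have aE : a \in E by apply: memv_adjoin.
have := Fermat's_little_theorem E a; rewrite aE => /esym/eqP Ha.
apply/eqP; rewrite eqn_leq (dvdn_leq n_gt0 dE) /= leqNgt; apply/negP => dlt.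
have := @cycquot_dvd q n (q_gt1 F) n_gt0 (\dim E) dE0 dE dlt.
case/dvdnP => k Hk; move: aM; rewrite Hk mulnC exprM.
have -> : a ^+ (q ^ \dim E - 1) = 1.
  apply: (mulIf a0); rewrite mul1r -exprSr subn1 prednK ?Ha //.
  by rewrite expn_gt0 ltnW // q_gt1.
by rewrite expr1n eqxx.
Qed.

Definition PL (a : L) : {poly L} := \prod_(i < n) ('X - (a ^+ (q ^ i))%:P).

Lemma PL_over (a : L) : PL a \is a polyOver 1%VS.
Proof.
pose f (x : L) := x ^+ q.
have fA : zmod_morphism f.
  move=> x y; rewrite /f; have := @frobD F L (x - y) y; rewrite subrK => ->.
  by rewrite addrK.
have fM : monoid_morphism f by rewrite /f; split=> [|x y]; rewrite ?exprMn ?expr1n.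
pose faM := GRing.isZmodMorphism.Build _ _ f fA.
pose fmM := GRing.isMonoidMorphism.Build _ _ f fM.
pose fR : {rmorphism L -> L} := HB.pack f faM fmM.
have hfix : map_poly fR (PL a) = PL a.
  rewrite /PL map_prod_XsubC.
  under eq_bigr => i _ do rewrite /= /f -exprM -expnSr.
  pose g i := ('X - (a ^+ (q ^ i))%:P : {poly L}).
  apply: (@mulfI _ (g 0%N)); first by rewrite polyXsubC_eq0.
  rewrite -(big_ord_recl n g) big_ord_recr /= mulrC; congr (_ * _).
  by rewrite /g (@frob_fix F L n dimL) expn0 expr1.
apply/polyOverP => i; rewrite (@in1E F L).
by have := congr1 (fun p : {poly L} => p`_i) hfix; rewrite coef_map /= /f => ->.
Qed.

Lemma PL_seq (a : L) :
  PL a = \prod_(z <- mkseq (fun i => a ^+ (q ^ i)) n) ('X - z%:P).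
Proof.
by rewrite /PL -(big_mkord xpredT (fun i => 'X - (a ^+ (q ^ i))%:P)) /mkseq big_map /index_iota subn0.
Qed.

Lemma PL_monic (a : L) : PL a \is monic.
Proof. by rewrite PL_seq monic_prod_XsubC. Qed.

Lemma PL_size (a : L) : size (PL a) = n.+1.
Proof. by rewrite PL_seq size_prod_XsubC size_mkseq. Qed.

Lemma PL_root (a : L) : root (PL a) a.
Proof.
rewrite /root /PL horner_prod (bigD1 (Ordinal n_gt0)) //= !hornerE.
by rewrite expn0 expr1 subrr mul0r.
Qed.

Lemma PL_min (a : L) : a != 0 -> a ^+ M != 1 -> minPoly 1 a = PL a.
Proof.
move=> a0 aM.
have hd := minPoly_dvdp (PL_over a) (PL_root a).
apply/eqP; rewrite -eqp_monic ?monic_minPoly ?PL_monic //.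
rewrite -dvdp_size_eqp // size_minPoly PL_size eqSS.
have := dim_Fadjoin 1%AS a; rewrite (alpha_deg a a0 aM) dimv1 muln1 => ->.
by [].
Qed.

Lemma sum_sets_cast (a : L) (m w : nat) (ps : seq L) : m = n ->
  (forall i, (i < n)%N -> ps`_i = a ^+ (q ^ i)) ->
  \sum_(I in {set 'I_m} | #|I| == w) \prod_(i in I) ps`_i =
  \sum_(I : {set 'I_n} | #|I| == w) a ^+ spow q n I.
Proof.
move=> hm; subst m => hps; apply: eq_bigr => I _.
rewrite /spow -prodrXr; apply: eq_bigr => i _; exact: hps.
Qed.

Lemma PL_coef (a : L) w : (w <= n)%N ->
  (PL a)`_(n - w) = (-1) ^+ w * \sum_(I : {set 'I_n} | #|I| == w) a ^+ spow q n I.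
Proof.
move=> wn; rewrite PL_seq coef_prod_XsubC ?size_mkseq ?leq_subr //.
rewrite subKn // (@sum_sets_cast a n w _ erefl) //.
by move=> i hi; rewrite nth_mkseq.
Qed.

Lemma bridge (a : L) : a != 0 -> a ^+ M != 1 ->
  exists P : {poly F}, [/\ irreducible_poly P, P \is monic, size P = n.+1
                         & map_poly (in_alg L) P = PL a].
Proof.
move=> a0 aM; have /polyOver1P [P hP] := PL_over a.
have hmon : P \is monic by rewrite -(map_monic (in_alg L)) -hP PL_monic.
have hsz : size P = n.+1 by rewrite -(size_map_poly (in_alg L)) -hP PL_size.
exists P; split => //.
split; first by rewrite hsz ltnS.
move=> Q szQ QP.
have hQ : map_poly (in_alg L) Q \is a polyOver 1%VS by apply/polyOver1P; exists Q.
have := @minPoly_irr _ L 1%AS a _ hQ; rewrite (PL_min a a0 aM) hP dvdp_map => /(_ QP).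
rewrite eqp_map => /orP[//|].
have -> : (1 : {poly L}) = map_poly (in_alg L) 1 by rewrite rmorph1.
rewrite eqp_map => /eqp_size; rewrite size_poly1 => h.
by rewrite h in szQ.
Qed.

End Bridge.

Lemma omega_sum (R : nzRingType) (q n : nat) (q_gt1 : (1 < q)%N) (x : R) w :
  (forall I : {set 'I_n}, #|I| = w -> (spow q n I < q ^ n - 1)%N) ->
  \sum_(I : {set 'I_n} | #|I| == w) x ^+ spow q n I =
  \sum_(k : 'I_(q ^ n - 1)) (inOmega q n w k)%:R * x ^+ k.
Proof.
move=> hlt.
have step1 : forall k : 'I_(q ^ n - 1), (inOmega q n w k)%:R * x ^+ k =
    \sum_(I : {set 'I_n} | (#|I| == w) && (nat_of_ord k == spow q n I)) x ^+ k.
  move=> k; rewrite /inOmega; case: existsP => [[I0 /andP[h1 h2]]|hno].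
    rewrite mul1r (big_pred1 I0) // => I /=.
    apply/idP/eqP => [/andP[_ /eqP h3]|->]; last by rewrite h1 h2.
    by apply: (@spow_inj q q_gt1 n); rewrite -h3; apply/eqP.
  rewrite mul0r big_pred0 // => I; apply/negP => hI; apply: hno; by exists I.
under [RHS]eq_bigr => k _ do rewrite step1.
have step2 : forall I : {set 'I_n}, #|I| == w ->
    x ^+ spow q n I = \sum_(k : 'I_(q ^ n - 1) | nat_of_ord k == spow q n I) x ^+ k.
  move=> I /eqP hI; rewrite (big_pred1 (Ordinal (hlt I hI))) // => k /=.
have step3 : forall I : {set 'I_n}, (if #|I| == w then x ^+ spow q n I else 0) =
    \sum_(k : 'I_(q ^ n - 1)) (if (#|I| == w) && (nat_of_ord k == spow q n I) then x ^+ k else 0).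
  move=> I; case: ifP => h.
    by rewrite step2 // big_mkcond.
  by rewrite big1.
rewrite big_mkcond /=.
under eq_bigr => I _ do rewrite step3.
rewrite exchange_big /=; apply: eq_bigr => k _.
rewrite [RHS]big_mkcond /=; apply: eq_bigr => I _.
by case: (#|I| == w).
Qed.

Lemma omega0 (q n : nat) (k : nat) : inOmega q n 0 k = (k == 0)%N.
Proof.
rewrite /inOmega; apply/existsP/eqP => [[I /andP[/eqP h1 /eqP ->]]|->].
  by move/eqP: h1; rewrite cards_eq0 => /eqP ->; rewrite big_set0.
by exists set0; rewrite cards0 big_set0.
Qed.

Section Main.
Variables (F : finFieldType) (L : fieldExtType F) (n : nat).
Hypothesis n_gt0 : (0 < n)%N.
Hypothesis dimL : \dim {:L} = n.
Variables (W : {set 'I_n.+1}) (c : F).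
Hypothesis hW : #|F| = 2%N -> ord_max \notin W.
Local Notation q := #|F|.
Local Notation N := (q ^ n - 1)%N.
Local Notation M := (`|cycquot q n|%N).
Local Notation Gs := (@Gs F L n).
Local Notation PL := (@PL F L n).

Lemma Gs_sub (a : L) (f g : 'I_N -> F) :
  Gs a (fun k => f k - g k) = Gs a f - Gs a g.
Proof.
rewrite /Gs -sumrB; apply: eq_bigr => k _.
by rewrite -!in_algE rmorphB mulrBl.
Qed.

Lemma Gs_delta0 (a : L) : Gs a (@delta F q n N 0) = 1.
Proof.
rewrite /Gs (bigD1 (Ordinal (@N_gt0 F n n_gt0))) //= big1 ?addr0.
  by rewrite /delta omega0 eqxx expr0 -in_algE rmorph1 mulr1.
move=> k hk; rewrite /delta omega0.
have -> : (nat_of_ord k == 0%N) = false.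
  by apply/negbTE; apply: contra hk => /eqP h; apply/eqP/val_inj.
by rewrite -in_algE rmorph0 mul0r.
Qed.

Lemma omega_cond (w : 'I_n.+1) : w \in W ->
  forall I : {set 'I_n}, #|I| = w -> (spow q n I < q ^ n - 1)%N.
Proof.
move=> wW I hI; apply: (@spow_lt q (q_gt1 F) n I n_gt0).
case: (ltnP w n) => hw.
  apply/orP; right; apply/eqP => IT; move: hI; rewrite IT cardsT card_ord => h.
  lia.
apply/orP; left.
have wmax : w = ord_max by apply: val_inj => /=; apply/eqP; rewrite eqn_leq hw -ltnS ltn_ord.
have := q_gt1 F; rewrite leq_eqVlt => /orP[/eqP h2|//].
by exfalso; move: wW; rewrite wmax; apply/negP; apply: hW.
Qed.

Lemma Gs_gamma (a : L) : Gs a (gammaWc W c) =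
  \sum_(w in W) (-1) ^+ w * \sum_(I : {set 'I_n} | #|I| == w) a ^+ spow q n I - c%:A.
Proof.
rewrite /gammaWc.
rewrite (Gs_sub a (fun k => \sum_(w in W) (-1) ^+ w * @delta F q n N w k)
                  (fun k => c * @delta F q n N 0 k)).
congr (_ - _).
  rewrite /Gs.
  under eq_bigr => k _ do rewrite -in_algE rmorph_sum /= mulr_suml.
  rewrite exchange_big /=; apply: eq_bigr => w wW.
  rewrite (@omega_sum L q n (q_gt1 F) a w (omega_cond w wW)) mulr_sumr.
  apply: eq_bigr => k _.
  by rewrite -in_algE rmorphM rmorph_sign /delta rmorph_nat mulrA.
transitivity (c%:A * Gs a (@delta F q n N 0)); last by rewrite Gs_delta0 mulr1.
rewrite /Gs mulr_sumr; apply: eq_bigr => k _.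
by rewrite -!in_algE rmorphM mulrA.
Qed.

Lemma Ssum_map (P : {poly F}) (a : L) : map_poly (in_alg L) P = PL a ->
  (Ssum (negset W) P)%:A =
  \sum_(w in W) (-1) ^+ w * \sum_(I : {set 'I_n} | #|I| == w) a ^+ spow q n I.
Proof.
move=> hP; rewrite /Ssum /negset -in_algE rmorph_sum big_imset /=; last first.
  by move=> x y _ _; apply: rev_ord_inj.
apply: eq_bigr => w _.
have := congr1 (fun p : {poly L} => p`_(rev_ord w)) hP; rewrite coef_map /= => ->.
by rewrite subSS (@PL_coef F L n a w (leq_ord w)).
Qed.

Lemma key_ident (a : L) (P : {poly F}) : map_poly (in_alg L) P = PL a ->
  (Ssum (negset W) P - c)%:A = Gs a (gammaWc W c).
Proof.
by move=> hP; rewrite Gs_gamma -(Ssum_map P a hP) -!in_algE rmorphB.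
Qed.

Lemma expq1 (x : F) : x != 0 -> x ^+ q.-1 = 1.
Proof.
move=> x0; apply: (mulIf x0); rewrite mul1r -exprSr prednK ?expf_card //.
by rewrite ltnW // q_gt1.
Qed.

End Main.


Theorem lemma3p2 (F : finFieldType) (n : nat) (W : {set 'I_n.+1}) (c : F) :
  (2 <= n)%N ->
  (#|F| = 2%N -> ord_max \notin W) ->
  ((forall r, is_least_period (gammaWc W c) r -> ~~ (r%:Z %| cycquot #|F| n)%Z) ->
     exists P : {poly F}, [/\ irreducible_poly P, P \is monic, size P = n.+1
                            & Ssum (negset W) P != c])
  /\
  ((forall r, is_least_period (DeltaWc W c) r -> ~~ (r%:Z %| cycquot #|F| n)%Z) ->
     exists P : {poly F}, [/\ irreducible_poly P, P \is monic, size P = n.+1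
                            & Ssum (negset W) P = c]).
Proof.
move=> n2 hW.
have n_gt0 : (0 < n)%N by apply: leq_trans n2.
have [L dimL] := ext_exists F n n_gt0.
have NG := @N_gt0 F n n_gt0.
have finish : forall f : 'I_(#|F| ^ n - 1) -> F,
    (forall r, is_least_period f r -> ~~ (r%:Z %| cycquot #|F| n)%Z) ->
    ~ periodic f `|cycquot #|F| n|%N.
  move=> f Hf Pf; have [r hr] := @least_period_exists _ _ f NG.
  have := @least_period_dvd _ _ f NG _ _ hr Pf.
  by have := Hf r hr; rewrite dvdzE /= => /negP.
split => Hper.
  apply: NNPP => Hno; apply: (finish _ Hper).
  apply: (@key F L n n_gt0 dimL) => a a0 aM.
  have [P [Pirr Pmon Psz hP]] := @bridge F L n n_gt0 dimL a a0 aM.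
  rewrite -(@key_ident F L n n_gt0 dimL W c hW a P hP); case: (eqVneq (Ssum (negset W) P) c) => [->|hne].
    by rewrite subrr scale0r.
  by exfalso; apply: Hno; exists P.
apply: NNPP => Hno; apply: (finish _ Hper).
apply: (@key F L n n_gt0 dimL) => a a0 aM.
have [P [Pirr Pmon Psz hP]] := @bridge F L n n_gt0 dimL a a0 aM.
have hne : Ssum (negset W) P - c != 0.
  rewrite subr_eq0; apply/negP => /eqP he; apply: Hno; by exists P.
rewrite /DeltaWc.
rewrite (@Gs_sub F L n a (@delta F #|F| n _ 0) (convpow #|F|.-1 (gammaWc W c))).
have hq : (0 < #|F|.-1)%N by rewrite -ltnS prednK ?q_gt1 // ltnW // q_gt1.
rewrite (@Gs_delta0 F L n n_gt0 a) (@Gs_convpow F L n n_gt0 dimL a _ _ a0 hq).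
rewrite -(@key_ident F L n n_gt0 dimL W c hW a P hP) -in_algE -rmorphXn /=.
by rewrite (@expq1 F _ hne) scale1r subrr.
Qed.
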